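(* Let $K$ be a compact Hausdorff topological space and $\kappa$ an infinite cardinal. If $C(K)$ admits an equivalent norm $|||\cdot|||$ such that $(C(K),|||\cdot|||)$ is $\mathrm{ASQ}_{<\kappa}$, then $C(K)$ contains an isomorphic copy of $c_0(\kappa)$.
   Context: $C(K)$ is the space of real-valued continuous functions on $K$ with the supremum norm. A Banach space $Z$ is $\mathrm{ASQ}_{<\kappa}$ if for every set $A\subset S_Z$ with $|A|<\kappa$ and every $\varepsilon>0$ there exists $y\in S_Z$ with $\|x\pm y\|\le 1+\varepsilon$ for all $x\in A$. *)

(* Defs.v *)
From HB Require Import structures.
From mathcomp Require Import all_boot all_order all_algebra.
From mathcomp Require Import all_classical all_reals all_analysis.
Set Implicit Arguments. Unset Strict Implicit. Unset Printing Implicit Defensive.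
Import Order.TTheory GRing.Theory Num.Theory.
Import numFieldNormedType.Exports.
Local Open Scope classical_set_scope.
Local Open Scope ring_scope.

(* Cardinal comparison |A| < |B| for sets (possibly in different types):
   injection A -> B and no injection B -> A (Cantor-Schroeder-Bernstein). *)
Definition card_lt T U (A : set T) (B : set U) : Prop :=
  (A #<= B)%card /\ ~ (B #<= A)%card.

(* The sup norm on C(K) (K compact, so the sup is attained/finite on continuous f). *)
Definition supnorm (R : realType) (K : topologicalType) (f : K -> R) : R :=
  sup (range (fun x => `|f x|)).

Definition is_norm_CK (R : realType) (K : topologicalType) (N : (K -> R) -> R) : Prop :=
  (forall f g : K -> R, continuous f -> continuous g ->
     N (fun x => f x + g x) <= N f + N g) /\
  (forall (a : R) (f : K -> R), continuous f ->
     N (fun x => a * f x) = `|a| * N f) /\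
  (forall f : K -> R, continuous f -> N f = 0 -> f = (fun _ => 0)).

Definition equiv_norm_CK (R : realType) (K : topologicalType) (N : (K -> R) -> R) : Prop :=
  is_norm_CK N /\
  exists c C : R, 0 < c /\ 0 < C /\
    forall f : K -> R, continuous f ->
      c * supnorm f <= N f /\ N f <= C * supnorm f.

(* (C(K), N) is ASQ_{<kappa}, where the cardinal kappa is |I|. *)
Definition ASQ_lt (R : realType) (K : topologicalType) (N : (K -> R) -> R)
    (I : Type) : Prop :=
  forall A : set (K -> R),
    A `<=` [set f | continuous f /\ N f = 1] ->
    card_lt A [set: I] ->
    forall eps : R, 0 < eps ->
      exists y : K -> R, continuous y /\ N y = 1 /\
        forall x, A x ->
          N (fun t => x t + y t) <= 1 + eps /\ N (fun t => x t - y t) <= 1 + eps.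

Definition c0 (R : realType) (I : Type) : set (I -> R) :=
  [set x | forall eps : R, 0 < eps -> finite_set [set i | eps <= `|x i|]].

Definition c0norm (R : realType) (I : Type) (x : I -> R) : R :=
  sup (range (fun i => `|x i|)).

Definition contains_c0 (R : realType) (K : topologicalType) (I : Type) : Prop :=
  exists T : (I -> R) -> (K -> R),
    (forall x, @c0 R I x -> continuous (T x)) /\
    (forall (a : R) (x y : I -> R), @c0 R I x -> @c0 R I y ->
       T (fun i => a * x i + y i) = (fun t => a * T x t + T y t)) /\
    exists m M : R, 0 < m /\ 0 < M /\
      forall x, @c0 R I x ->
        m * c0norm x <= supnorm (T x) /\ supnorm (T x) <= M * c0norm x.

(* Main.v *)
Require Import Defs.
Set Warnings "-notation-overridden,-ambiguous-paths,-notation-incompatible-prefix,-redundant-canonical-projection".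
From HB Require Import structures.
From mathcomp Require Import all_boot all_order all_algebra.
From mathcomp Require Import all_classical all_reals all_analysis.
From mathcomp Require ring lra finmap.
Import Order.TTheory GRing.Theory Num.Theory.
Import numFieldNormedType.Exports.

Module Part1.
Set Implicit Arguments. Unset Strict Implicit. Unset Printing Implicit Defensive.
Local Open Scope classical_set_scope.

Definition injle {T U} (A : set T) (B : set U) :=
  exists2 f : T -> U, set_fun A B f & set_inj A f.

Lemma injle_card T U (A : set T) (B : set U) : injle A B -> (A #<= B)%card.
Proof. by move=> H; have [g] := proj2 injfunPex H; exact: inj_card_le. Qed.

Lemma card_injle T U (A : set T) (B : set U) (u0 : U) :
  (A #<= B)%card -> injle A B.
Proof. by case/card_leP=> g; apply/injfunPex; squash (valLR u0 g). Qed.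

Lemma injle_trans T U V (A : set T) (B : set U) (C : set V) :
  injle A B -> injle B C -> injle A C.
Proof.
move=> [f fAB fi] [g gBC gi]; exists (g \o f).
  by move=> x Ax; apply: gBC; apply: fAB.
move=> x y Ax Ay /= /gi H; apply: fi => //; apply: H; apply/mem_set; apply: fAB;
  exact: set_mem.
Qed.

Lemma injle_sub T (A B : set T) : A `<=` B -> injle A B.
Proof. by move=> AB; exists id. Qed.

Lemma injle_refl T (A : set T) : injle A A.
Proof. exact: injle_sub. Qed.

Lemma choice_on T U (A : set T) (P : T -> U -> Prop) (u0 : U) :
  (forall x, A x -> exists y, P x y) -> exists f : T -> U, forall x, A x -> P x (f x).
Proof.
move=> H.
have H' : forall x, exists y, A x -> P x y.
  move=> x; case: (pselect (A x)) => [Ax|nAx]; last by exists u0.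
  by have [y Py] := H x Ax; exists y.
by have [f Hf] := choice H'; exists f.
Qed.

Lemma injle_total T U (A : set T) (B : set U) (t0 : T) (u0 : U) :
  injle A B \/ injle B A.
Proof.
pose P (G : set (T * U)) := [/\ G `<=` A `*` B,
  (forall x y y', G (x,y) -> G (x,y') -> y = y') &
  (forall x x' y, G (x,y) -> G (x',y) -> x = x')].
have [G [[GAB Gf Gi] Gmax]] : exists G, P G /\ forall G', G `<` G' -> ~ P G'.
  apply: Zorn_bigcup => F FP Ftot; split.
  - by move=> [x y] [G FG Gxy]; have [H _ _] := FP G FG; exact: H.
  - move=> x y y' [G1 F1 H1] [G2 F2 H2].
    case: (Ftot _ _ F1 F2) => sub.
      by have [_ H _] := FP G2 F2; apply: (H x y y'); [exact: sub H1|].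
    by have [_ H _] := FP G1 F1; apply: (H x y y'); [|exact: sub H2].
  - move=> x x' y [G1 F1 H1] [G2 F2 H2].
    case: (Ftot _ _ F1 F2) => sub.
      by have [_ _ H] := FP G2 F2; apply: (H x x' y); [exact: sub H1|].
    by have [_ _ H] := FP G1 F1; apply: (H x x' y); [|exact: sub H2].
case: (pselect (forall a, A a -> exists b, G (a,b))) => [HA|nHA].
  left; have [f Hf] := choice_on u0 HA; exists f.
    by move=> a Aa; have [_ ] := GAB _ (Hf a Aa).
  move=> a a' /set_mem Aa /set_mem Aa' ff'.
  by apply: (Gi _ _ (f a)) => //; [exact: Hf | rewrite ff'; exact: Hf].
case: (pselect (forall b, B b -> exists a, G (a,b))) => [HB|nHB].
  right; have [f Hf] := choice_on t0 HB; exists f.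
    by move=> b Bb; have [] := GAB _ (Hf b Bb).
  move=> b b' /set_mem Bb /set_mem Bb' ff'.
  by apply: (Gf (f b)) => //; [exact: Hf | rewrite ff'; exact: Hf].
exfalso.
move/existsNP: nHA => [a]; move/not_implyP => [Aa nGa].
move/existsNP: nHB => [b]; move/not_implyP => [Bb nGb].
apply: (Gmax (G `|` [set (a,b)])).
  split; first by move=> p Gp; left.
  by move=> H; apply: nGa; exists b; apply: H; right.
split.
- by move=> p [Gp|->]; [exact: GAB|].
- move=> x y y' [H1|/= E1] [H2|/= E2].
  + exact: Gf H1 H2.
  + by exfalso; case: E2 => ? ?; subst; apply: nGa; exists y.
  + by exfalso; case: E1 => ? ?; subst; apply: nGa; exists y'.
  + by case: E1 E2 => ? ? [? ?]; subst.
- move=> x x' y [H1|/= E1] [H2|/= E2].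
  + exact: Gi H1 H2.
  + by exfalso; case: E2 => ? ?; subst; apply: nGb; exists x.
  + by exfalso; case: E1 => ? ?; subst; apply: nGb; exists x'.
  + by case: E1 E2 => ? ? [? ?]; subst.
Qed.

Lemma injle_prod T T' U U' (A : set T) (A' : set T') (B : set U) (B' : set U') :
  injle A A' -> injle B B' -> injle (A `*` B) (A' `*` B').
Proof.
move=> [f fA fi] [g gB gi]; exists (fun p => (f p.1, g p.2)).
  by move=> [a b] [/= Aa Bb]; split; [exact: fA|exact: gB].
move=> [a b] [a' b'] /set_mem [/= Aa Bb] /set_mem [/= Aa' Bb'] [E1 E2].
have -> := fi a a' (mem_set Aa) (mem_set Aa') E1.
by have -> := gi b b' (mem_set Bb) (mem_set Bb') E2.
Qed.

Lemma injle_G2 T (Y : set T) (t0 : T) : injle (Y `*` Y) Y -> infinite_set Y ->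
  injle ((Y `*` [set: bool]) `*` (Y `*` [set: bool])) Y.
Proof.
move=> [g gf gi] /infiniteP /(card_injle t0) [k kY ki].
pose e (st : bool * bool) := k (2 * st.1 + st.2)%N.
have eY st : Y (e st) by apply: kY.
have ei st st' : e st = e st' -> st = st'.
  move=> /ki H; have := H (mem_set I) (mem_set I).
  by case: st st' {H} => [[] []] [[] []] //=.
exists (fun pq => g (g (pq.1.1, pq.2.1), e (pq.1.2, pq.2.2))).
  move=> [[a s] [b t]] [[Ya _] [Yb _]]; apply: (gf); split; last exact: eY.
  by apply: (gf); split.
move=> [[a s] [b t]] [[a' s'] [b' t']] /set_mem [[Ya _] [Yb _]]
  /set_mem [[Ya' _] [Yb' _]] E.
simpl in *.
have := gi _ _ (mem_set (conj (gf (a,b) (conj Ya Yb)) (eY (s,t))))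
  (mem_set (conj (gf (a',b') (conj Ya' Yb')) (eY (s',t')))) E.
case=> /(gi _ _ (mem_set (conj Ya Yb)) (mem_set (conj Ya' Yb'))) [-> ->].
by move=> /ei [-> ->].
Qed.

Lemma injle_union T (Y Z : set T) : injle (Z `\` Y) Y -> injle (Y `|` Z) (Y `*` [set: bool]).
Proof.
move=> [j jY ji].
exists (fun u => if pselect (Y u) then (u, false) else (j u, true)).
  move=> u Hu; case: pselect => [Yu|nYu]; first by [].
  by split => //=; apply: jY; split => //; case: Hu.
move=> u v /set_mem Hu /set_mem Hv.
case: pselect => [Yu|nYu]; case: pselect => [Yv|nYv] //; first by case.
case=> E; apply: ji => //; apply/mem_set; split => //.
  by case: Hu.
by case: Hv.
Qed.

Lemma injle_image_inv T U (Y : set T) (h : T -> U) (t0 : T) :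
  set_inj Y h -> injle (h @` Y) Y.
Proof.
move=> hi.
have [k Hk] := @choice_on U T (h @` Y) (fun b a => Y a /\ h a = b) t0
  (fun b '(ex_intro2 a Ya E) => ex_intro _ a (conj Ya E)).
exists k; first by move=> b /Hk [].
move=> b b' /set_mem /Hk [_ E] /set_mem /Hk [_ E'] kk.
by rewrite -E -E' kk.
Qed.

Section Hess.
Variables (T : Type) (X : set T) (t0 : T).
Hypothesis Xinf : infinite_set X.

Let T0 := (((T * T) * T) + T)%type.
Definition Gr (S : set T0) : set ((T * T) * T) := [set p | S (inl p)].
Definition Dm (S : set T0) : set T := [set x | S (inr x)].

Record PH (S : set T0) : Prop := {
  ph1 : Dm S `<=` X;
  ph2 : Dm S !=set0 -> infinite_set (Dm S);
  ph3 : Gr S `<=` (Dm S `*` Dm S) `*` Dm S;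
  ph4 : forall p z z', Gr S (p, z) -> Gr S (p, z') -> z = z';
  ph5 : forall p p' z, Gr S (p, z) -> Gr S (p', z) -> p = p';
  ph6 : forall p, (Dm S `*` Dm S) p -> exists z, Gr S (p, z) }.

Section Ext.
Variables (S : set T0) (B : set T) (k : T * T -> T).
Let Y := Dm S.
Let W := ((Y `|` B) `*` (Y `|` B)) `\` (Y `*` Y).
Hypotheses (HS : PH S) (BX : B `<=` X `\` Y) (infYB : infinite_set (Y `|` B))
  (kf : set_fun W B k) (ki : set_inj W k).
Definition Sext : set T0 :=
  S `|` [set inr b | b in B] `|` [set inl (p, k p) | p in W].

Lemma Dm_Sext : Dm Sext = Y `|` B.
Proof.
apply/seteqP; split => x.
  by case=> [[Sx|[b Bb [<-]]]|[p _ //]]; [left|right].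
by case=> [Yx|Bx]; [left; left|left; right; exists x].
Qed.

Lemma Gr_Sext : Gr Sext = Gr S `|` [set (p, k p) | p in W].
Proof.
apply/seteqP; split => q.
  by case=> [[Sq|[b _ //]]|[p Wp [<-]]]; [left|right; exists p].
by case=> [Sq|[p Wp <-]]; [left; left|right; exists p].
Qed.

Lemma PH_Sext : PH Sext.
Proof.
have [h1 h2 h3 h4 h5 h6] := HS.
rewrite /Sext; split; rewrite ?Dm_Sext ?Gr_Sext.
- by move=> x [/h1 //|/BX []].
- by move=> _.
- move=> [p z] [/h3 [[Y1 Y2] Yz]|[q Wq [<- <-]]].
    by split; [split; left|left].
  by have [[Y1 Y2] _] := Wq; split => //; right; apply: kf.
- move=> p z z' [H1|[q Wq [E1 E2]]] [H2|[q' Wq' [E1' E2']]].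
  + exact: h4 H1 H2.
  + by exfalso; have [YY _] := h3 _ H1; case: Wq' => _; apply; rewrite E1'.
  + by exfalso; have [YY _] := h3 _ H2; case: Wq => _; apply; rewrite E1.
  + by rewrite -E2 -E2' E1 E1'.
- move=> p p' z [H1|[q Wq [E1 E2]]] [H2|[q' Wq' [E1' E2']]].
  + exact: h5 H1 H2.
  + by exfalso; have [_ /= Yz] := h3 _ H1; have [_ ] := BX (kf Wq'); rewrite E2'.
  + by exfalso; have [_ /= Yz] := h3 _ H2; have [_ ] := BX (kf Wq); rewrite E2.
  + rewrite -E1 -E1'; apply: ki; rewrite ?inE //.
    by rewrite E2 E2'.
- move=> [x1 x2] [H1 H2].
  case: (pselect ((Y `*` Y) (x1, x2))) => [YY|nYY].
    by have [z Hz] := h6 _ YY; exists z; left.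
  by exists (k (x1, x2)); right; exists (x1, x2).
Qed.

Lemma Sext_proper : B !=set0 -> S `<` Sext.
Proof.
move=> [b Bb]; split; first by move=> q Sq; left; left.
move=> H; have := H (inr b) (or_introl (or_intror (ex_intro2 _ _ b Bb erefl))).
by move=> Sb; have [_ ] := BX Bb; apply.
Qed.

End Ext.

Lemma hessenberg : injle (X `*` X) X.
Proof.
have [S [HS Smax]] : exists S, PH S /\ forall S', S `<` S' -> ~ PH S'.
  apply: Zorn_bigcup => F FP Ftot; split.
  - by move=> x [S FS Sx]; apply: (ph1 (FP S FS)).
  - move=> [x [S FS Sx]]; apply: (@sub_infinite_set _ (Dm S)).
      by move=> y Sy; exists S.
    by apply: (ph2 (FP S FS)); exists x.
  - move=> [[a b] z] [S FS Spz]; have [[Ya Yb] Yz] := ph3 (FP S FS) Spz.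
    by split; [split|]; exists S.
  - move=> p z z' [S1 F1 H1] [S2 F2 H2]; case: (Ftot _ _ F1 F2) => sub.
      exact: (ph4 (FP S2 F2) (sub _ H1) H2).
    exact: (ph4 (FP S1 F1) H1 (sub _ H2)).
  - move=> p p' z [S1 F1 H1] [S2 F2 H2]; case: (Ftot _ _ F1 F2) => sub.
      exact: (ph5 (FP S2 F2) (sub _ H1) H2).
    exact: (ph5 (FP S1 F1) H1 (sub _ H2)).
  - move=> [a b] [[S1 F1 H1] [S2 F2 H2]]; case: (Ftot _ _ F1 F2) => sub.
      have [z Hz] := ph6 (FP S2 F2) (conj (sub _ H1) H2).
      by exists z; exists S2.
    have [z Hz] := ph6 (FP S1 F1) (conj H1 (sub _ H2)).
    by exists z; exists S1.
pose Y := Dm S.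
have Yne : Y !=set0.
  case: (pselect (Y !=set0)) => // nY; exfalso.
  have [k kX ki] : injle [set: nat] X := card_injle t0 (proj1 (infiniteP X) Xinf).
  pose B := k @` setT.
  have Y0 : forall x, ~ Y x by move=> x Yx; apply: nY; exists x.
  have Binf : infinite_set B.
    by apply/infiniteP; apply: injle_card; exists k => // n _; exists n.
  have injBB : injle (B `*` B) B.
    have h1 : injle B [set: nat] := injle_image_inv 0%N ki.
    have h2 : injle ([set: nat] `*` [set: nat]) [set: nat].
      apply: (card_injle 0%N); rewrite setXTT.
      by have := card_nat2; rewrite card_eq_le => /andP [].
    have h3 : injle [set: nat] B by exists k => // n _; exists n.
    exact: injle_trans (injle_prod h1 h1) (injle_trans h2 h3).
  have BX : B `<=` X `\` Y by move=> _ [n _ <-]; split; [apply: kX|apply: Y0].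
  have infYB : infinite_set (Y `|` B) by apply: (sub_infinite_set _ Binf) => x Bx; right.
  have [k' kf ki'] : injle (((Y `|` B) `*` (Y `|` B)) `\` (Y `*` Y)) B.
    apply: injle_trans injBB; apply: injle_sub => -[a b] [[Ha Hb] _].
    by split; [case: Ha => // /Y0|case: Hb => // /Y0].
  apply: (Smax _ (Sext_proper k' BX _) (PH_Sext HS BX infYB kf ki')).
  by exists (k 0%N), 0%N.
have Yinf := ph2 HS Yne.
have [g Hg] := choice_on t0 (ph6 HS).
have injYY : injle (Y `*` Y) Y.
  exists g; first by move=> p /Hg /(ph3 HS) [].
  move=> p p' /set_mem Hp /set_mem Hp' E.
  by apply: (ph5 HS (Hg _ Hp)); rewrite E; exact: Hg.
have H2 := injle_G2 t0 injYY Yinf.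
case: (injle_total Y (X `\` Y) t0 t0) => [[h hY hi]|H].
  exfalso; pose B := h @` Y.
  have BX : B `<=` X `\` Y by move=> _ [y Yy <-]; exact: hY.
  have infYB : infinite_set (Y `|` B) by apply: (sub_infinite_set _ Yinf) => x Yx; left.
  have [k' kf ki'] : injle (((Y `|` B) `*` (Y `|` B)) `\` (Y `*` Y)) B.
    have U1 : injle (B `\` Y) Y.
      exact: injle_trans (injle_sub (@subDsetl _ B Y)) (injle_image_inv t0 hi).
    have U2 := injle_union U1.
    have U3 : injle (((Y `|` B) `*` (Y `|` B)) `\` (Y `*` Y)) ((Y `*` [set: bool]) `*` (Y `*` [set: bool])).
      by apply: injle_trans (injle_prod U2 U2); apply: injle_sub => p [].
    apply: injle_trans (injle_trans U3 H2) _.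
    by exists h => // y Yy; exists y.
  have [y0 Yy0] := Yne.
  apply: (Smax _ (Sext_proper k' BX _) (PH_Sext HS BX infYB kf ki')).
  by exists (h y0), y0.
have U1 : injle X (Y `*` [set: bool]).
  by apply: injle_trans (injle_union H); apply: injle_sub => x Xx; right.
exact: injle_trans (injle_prod U1 U1) (injle_trans H2 (injle_sub (ph1 HS))).
Qed.

End Hess.

Fixpoint inL T (X : set T) (l : seq T) : Prop :=
  match l with nil => True | x :: l' => X x /\ inL X l' end.
Definition Lk T (X : set T) k := [set l : seq T | size l = k /\ inL X l].
Definition Lb T (X : set T) n := [set l : seq T | (size l < n)%N /\ inL X l].

Lemma Lk_inf T (X : set T) (t0 : T) : infinite_set X -> forall k, injle (Lk X k) X.
Proof.
move=> Xinf; elim=> [|k IH].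
  have [x0 Xx0] := infinite_setN0 Xinf.
  by exists (fun=> x0) => // l l' /set_mem [/size0nil -> _] /set_mem [/size0nil -> _] _.
apply: (injle_trans _ (injle_trans (injle_prod (injle_refl X) IH) (hessenberg t0 Xinf))).
exists (fun l => (head t0 l, behead l)).
  by case=> [|x l] [//= [<-] [Xx Xl]].
by move=> [|x l] [|x' l'] /set_mem [//= _ _] /set_mem [//= _ _] [-> ->].
Qed.

Lemma Lb_inf T (X : set T) (t0 : T) n : infinite_set X -> injle (Lb X n) X.
Proof.
move=> Xinf.
have H k : exists f, set_fun (Lk X k) X f /\ set_inj (Lk X k) f.
  by have [f ? ?] := Lk_inf t0 Xinf k; exists f.
have [f' Hf] := choice H.
have f'f k : set_fun (Lk X k) X (f' k) by case: (Hf k).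
have f'i k : set_inj (Lk X k) (f' k) by case: (Hf k).
have [e eX ei] := card_injle t0 (proj1 (infiniteP X) Xinf).
apply: injle_trans (hessenberg t0 Xinf).
exists (fun l => (e (size l), f' (size l) l)).
  by move=> l [_ Xl]; split; [apply: eX|apply: f'f].
move=> l l' /set_mem [_ Xl] /set_mem [_ Xl'] [E1].
have E : size l = size l' by apply: ei; rewrite ?inE.
rewrite -E => E2; apply: (f'i (size l)) => //; apply/mem_set; split => //.
Qed.

Lemma Lk_fin T (X : set T) : finite_set X -> forall k, finite_set (Lk X k).
Proof.
move=> Xfin; elim=> [|k IH].
  apply: (@sub_finite_set _ _ [set nil]); last exact: finite_set1.
  by move=> l [/size0nil ->].
apply: (@sub_finite_set _ _ [set p.1 :: p.2 | p in X `*` Lk X k]).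
  by case=> [|x l] [//= [<-] [Xx Xl]]; exists (x, l).
exact: finite_image (finite_setX Xfin IH).
Qed.

Lemma Lb_fin T (X : set T) n : finite_set X -> finite_set (Lb X n).
Proof.
move=> Xfin; apply: (@sub_finite_set _ _ (\bigcup_(k in `I_n) Lk X k)).
  by move=> l [Hl Xl]; exists (size l).
apply: bigcup_finite; first exact: finite_II.
by move=> k _; exact: Lk_fin.
Qed.

Lemma Lb_small T (X : set T) (t0 : T) n : finite_set (Lb X n) \/ injle (Lb X n) X.
Proof.
case: (pselect (finite_set X)) => [Xf|Xinf]; first by left; exact: Lb_fin.
by right; exact: Lb_inf.
Qed.

Lemma card_lt_small T U I (A : set T) (Y : set U) (i0 : I) (u0 : U) :
  infinite_set [set: I] -> ~ ([set: I] #<= Y)%card ->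
  (finite_set A \/ injle A Y) ->
  (A #<= [set: I])%card /\ ~ ([set: I] #<= A)%card.
Proof.
move=> Iinf nIY HA.
have YI : injle Y [set: I].
  case: (injle_total Y [set: I] u0 i0) => // /injle_card H; contradiction.
case: HA => [Af|AY].
  split; last by move=> /card_le_finite /(_ Af).
  have [m Am] := Af; move: Am; rewrite card_eq_le => /andP [Am _].
  apply: card_le_trans Am _; apply: card_le_trans (proj1 (infiniteP _) Iinf).
  exact: subset_card_le.
split; first exact: injle_card (injle_trans AY YI).
by move=> H; apply: nIY; exact: card_le_trans H (injle_card AY).
Qed.

End Part1.

Module Part2.
Import Part1.
Import ring lra.
Set Implicit Arguments. Unset Strict Implicit. Unset Printing Implicit Defensive.
Local Open Scope classical_set_scope.
Local Open Scope ring_scope.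

Section Basic.
Variables (R : realType) (K : topologicalType).
Implicit Types (f g : K -> R).

Lemma cD f g : continuous f -> continuous g -> continuous (fun t => f t + g t).
Proof. move=> cf cg x. have := @continuousD R R^o K f g x (cf x) (cg x). exact. Qed.

Lemma cM f g : continuous f -> continuous g -> continuous (fun t => f t * g t).
Proof. move=> cf cg x. have := continuousM (cf x) (cg x). exact. Qed.

Lemma cC (a : R) : continuous (fun _ : K => a).
Proof. exact: cst_continuous. Qed.

Lemma cZ (a : R) f : continuous f -> continuous (fun t => a * f t).
Proof. by move=> cf; apply: cM => //; exact: cC. Qed.

Lemma cN f : continuous f -> continuous (fun t => - f t).
Proof. move=> cf x. have := @continuousN R R^o K f x (cf x). exact. Qed.

Lemma cA f : continuous f -> continuous (fun t => `|f t|).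
Proof. move=> cf x; apply: (continuous_comp (cf x)). exact: (@norm_continuous R R^o). Qed.

Lemma cMax f g : continuous f -> continuous g -> continuous (fun t => Num.max (f t) (g t)).
Proof. move=> cf cg x. have := @continuous_max R K f g x (cf x) (cg x). exact. Qed.

Variable (cK : compact [set: K]) (k0 : K).

Lemma hsup f : continuous f -> has_sup (range (fun x => `|f x|)).
Proof.
move=> cf; apply: compact_has_sup; first by exists `|f k0|, k0.
by apply: continuous_compact => //; apply: continuous_subspaceT; exact: cA.
Qed.

Lemma supnorm_ge f x : continuous f -> `|f x| <= supnorm f.
Proof. by move=> cf; apply: sup_upper_bound; [exact: hsup|exists x]. Qed.

Lemma supnorm_le f M : (forall x, `|f x| <= M) -> supnorm f <= M.
Proof. by move=> H; apply: ge_sup; [exists `|f k0|, k0|move=> _ [x _ <-]]. Qed.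

Lemma supnorm_ge0 f : continuous f -> 0 <= supnorm f.
Proof. by move=> cf; apply: le_trans (supnorm_ge k0 cf). Qed.

Lemma supnorm_adh f r : continuous f -> r < supnorm f -> exists x, r < `|f x|.
Proof.
move=> cf rs; apply/not_existsP => H; move: rs; apply/negP; rewrite -leNgt.
by apply: supnorm_le => x; rewrite leNgt; apply/negP => H'; exact: (H x).
Qed.
End Basic.

Section NormLemmas.
Variables (R : realType) (K : topologicalType) (N : (K -> R) -> R).
Hypothesis hN : is_norm_CK N.
Implicit Types (f g x y : K -> R).

Lemma NZ a f : continuous f -> N (fun t => a * f t) = `|a| * N f.
Proof. by move=> cf; have [_ [H _]] := hN; exact: H. Qed.

Lemma ND f g : continuous f -> continuous g -> N (fun t => f t + g t) <= N f + N g.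
Proof. by move=> cf cg; have [H _] := hN; exact: H. Qed.

Lemma Nfun0 : N (fun _ => 0) = 0.
Proof.
by have := NZ 0 (@cC R K 0); rewrite normr0 !mul0r.
Qed.

Lemma Nge0 f : continuous f -> 0 <= N f.
Proof.
move=> cf; have := ND cf (@cZ _ _ (-1) _ cf); rewrite NZ // normrN normr1 mul1r.
have -> : (fun t => f t + -1 * f t) = (fun _ => 0).
  by apply: funext => t; rewrite mulN1r subrr.
by rewrite Nfun0 => H; lra.
Qed.

Lemma Neq0 f : continuous f -> N f = 0 -> f = (fun _ => 0).
Proof. by move=> cf; have [_ [_ H]] := hN; exact: H. Qed.

Lemma Nconv x y b t : continuous x -> continuous y ->
  N (fun s => x s + y s) <= b -> N (fun s => x s - y s) <= b -> -1 <= t <= 1 ->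
  N (fun s => x s + t * y s) <= b.
Proof.
move=> cx cy H1 H2 /andP [t1 t2].
have cxy : continuous (fun s => x s + y s) by apply: cD.
have cxy' : continuous (fun s => x s - y s) by apply: cD => //; exact: cN.
have -> : (fun s => x s + t * y s) =
  (fun s => (1 + t) / 2 * (x s + y s) + ((1 - t) / 2) * (x s - y s)).
  by apply: funext => s; field.
apply: le_trans (ND (cZ cxy) (cZ cxy')) _.
rewrite !NZ // !ger0_norm; last 2 first.
- by rewrite divr_ge0 // subr_ge0.
- by rewrite divr_ge0 // -lerBlDl sub0r.
apply: le_trans (_ : (1 + t) / 2 * b + (1 - t) / 2 * b <= b).
  apply: lerD; apply: ler_wpM2l => //.
    by rewrite divr_ge0 // -lerBlDl sub0r.
  by rewrite divr_ge0 // subr_ge0.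
by have -> : (1 + t) / 2 * b + (1 - t) / 2 * b = b by field.
Qed.

Lemma Nconv2 x y m b : continuous x -> continuous y ->
  N (fun s => x s + y s) <= b -> N y <= b -> 0 <= m <= 1 ->
  N (fun s => m * x s + y s) <= b.
Proof.
move=> cx cy H1 H2 /andP [m0 m1].
have cxy : continuous (fun s => x s + y s) by apply: cD.
have -> : (fun s => m * x s + y s) = (fun s => m * (x s + y s) + (1 - m) * y s).
  by apply: funext => s; ring.
apply: le_trans (ND (cZ cxy) (cZ cy)) _.
rewrite !NZ // !ger0_norm // ?subr_ge0 //.
apply: le_trans (_ : m * b + (1 - m) * b <= b).
  apply: lerD; apply: ler_wpM2l => //; by rewrite subr_ge0.
by have -> : m * b + (1 - m) * b = b by ring.
Qed.
End NormLemmas.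

End Part2.

Module Part3.
Import Part1.
Import Part2.
Import ring lra.
Set Implicit Arguments. Unset Strict Implicit. Unset Printing Implicit Defensive.
Local Open Scope classical_set_scope.
Local Open Scope ring_scope.

Lemma inLP (T : eqType) (X : set T) l : inL X l <-> forall p, p \in l -> X p.
Proof.
elim: l => [|x l IH] /=; first by split.
split.
  by move=> [Xx /IH H] p; rewrite in_cons => /orP [/eqP ->|/H].
by move=> H; split; [apply: H; rewrite mem_head|apply/IH => p pl; apply: H; rewrite in_cons pl orbT].
Qed.

Lemma inL_sub T (X X' : set T) l : X `<=` X' -> inL X l -> inL X' l.
Proof. by move=> XX'; elim: l => [|x l IH] //= [/XX' ? ?]; split => //; exact: IH. Qed.

Section Main.
Variables (R : realType) (K : topologicalType) (N : (K -> R) -> R).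
Hypothesis hN : is_norm_CK N.
Variable n : nat.
Hypothesis n2 : (2 <= n)%N.

Definition sphere := [set f : K -> R | continuous f /\ N f = 1].
Definition Sg (Y : set (K -> R)) : set (R * (K -> R)) :=
  [set p | (p.1 = 1 \/ p.1 = -1) /\ Y p.2].
Definition sumf (l : seq (R * (K -> R))) : K -> R :=
  fun t => \sum_(p <- l) p.1 * p.2 t.
Definition adm Y l := [/\ uniq (map snd l), (size l <= n)%N & inL (Sg Y) l].
Definition PY Y := Y `<=` sphere /\
  forall l, adm Y l -> N (sumf l) <= 1 + (size l)%:R / n%:R.
Definition nrmz (f : K -> R) := fun t => f t / N f.
Definition AY Y := [set nrmz (sumf l) | l in
  [set l | adm Y l /\ (size l < n)%N /\ N (sumf l) != 0]].
Definition eps : R := (2 * n)%:R^-1.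

Lemma sumf_nil : sumf [::] = (fun _ => 0).
Proof. by apply: funext => t; rewrite /sumf big_nil. Qed.

Lemma sumf_cons p l : sumf (p :: l) = (fun t => p.1 * p.2 t + sumf l t).
Proof. by apply: funext => t; rewrite /sumf big_cons. Qed.

Lemma sumf_perm l l' : perm_eq l l' -> sumf l = sumf l'.
Proof. by move=> pl; apply: funext => t; rewrite /sumf (perm_big _ pl). Qed.

Lemma sumf_cont Y l : Y `<=` sphere -> inL (Sg Y) l -> continuous (sumf l).
Proof.
move=> Ys; elim: l => [|p l IH] /=.
  by rewrite sumf_nil => _; exact: cC.
move=> [[_ /Ys [cp _]] /IH cl]; rewrite sumf_cons.
by apply: cD => //; exact: cZ.
Qed.

Lemma n_gt0 : (0 < n%:R :> R).
Proof. by rewrite ltr0n; case: n n2. Qed.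

Lemma eps_gt0 : 0 < eps.
Proof. by rewrite /eps invr_gt0 ltr0n muln_gt0 /=; case: n n2. Qed.

Lemma epsE : eps = n%:R^-1 / 2.
Proof. by rewrite /eps natrM invfM mulrC. Qed.

Lemma nrmz_sphere f : continuous f -> N f != 0 -> sphere (nrmz f).
Proof.
move=> cf Nf0; have Nf := Nge0 hN cf.
have -> : nrmz f = (fun t => (N f)^-1 * f t).
  by apply: funext => t; rewrite /nrmz mulrC.
split; first exact: cZ.
rewrite NZ // ger0_norm ?invr_ge0 // mulVf //.
Qed.

Lemma AY_sphere Y : Y `<=` sphere -> AY Y `<=` sphere.
Proof.
move=> Ys _ [l [[_ _ Hl] [_ Nl]] <-]; apply: nrmz_sphere => //.
exact: sumf_cont Hl.
Qed.

Lemma PY_ext Y y : PY Y -> continuous y -> N y = 1 ->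
  (forall x, AY Y x -> N (fun t => x t + y t) <= 1 + eps /\
                        N (fun t => x t - y t) <= 1 + eps) ->
  PY (Y `|` [set y]).
Proof.
move=> [Ys HY] cy Ny Hy; split.
  by move=> f [/Ys //|->].
move=> l [ul sl Hl].
have Hlp := proj1 (inLP _ _) Hl.
case: (boolP (y \in map snd l)) => [yl|nyl]; last first.
  have Hl' : inL (Sg Y) l.
    apply/inLP => p pl; have [sp [Yp|yp]] := Hlp p pl; split => //.
    by exfalso; move: nyl; rewrite -yp map_f.
  by apply: HY; split.
have [p pl py] := mapP yl.
have pr := perm_to_rem pl.
set l' := rem p l in pr *.
have [sp _] := Hlp p pl.
have ul' : uniq (map snd (p :: l')) by rewrite -(perm_uniq (perm_map snd pr)).
move: ul' => /= /andP [nyl' ul'].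
have szl : size l = (size l').+1 by rewrite (perm_size pr).
have sl2 : (size l' < n)%N by rewrite -ltnS -szl ltnS.
have adm' : adm Y l'.
  split => //; first exact: ltnW.
  apply/inLP => q ql'; have ql := mem_rem ql'.
  have [sq [Yq|yq]] := Hlp q ql; split => //.
  by exfalso; move: nyl'; rewrite -py -yq map_f.
have cs : continuous (sumf l') by case: adm' => _ _ H; exact: sumf_cont Ys H.
have Hm := HY l' adm'.
rewrite (sumf_perm pr) sumf_cons -py.
have sp1 : `|p.1| = 1 by case: sp => ->; rewrite ?normrN normr1.
rewrite szl -addn1 natrD.
set s := sumf l' in cs Hm *; set m := N s in Hm *.
set K1 := (size l')%:R in Hm *.
have u0 := n_gt0.
have Kn : K1 + 1 <= n%:R by rewrite /K1 natr1 ler_nat.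
set u := n%:R^-1.
have u0' : 0 < u by rewrite invr_gt0.
have Ku : K1 * u + u <= 1.
  have H : (K1 + 1) * u <= n%:R * u by apply: ler_wpM2r => //; exact: ltW.
  by move: H; rewrite mulrDl mul1r /u mulfV // lt0r_neq0.
have K0 : 0 <= K1 by rewrite /K1 ler0n.
move: Hm; rewrite -/u => Hm.
rewrite -/u mulrDl mul1r.
have eps_u : eps = u / 2 by rewrite epsE.
case: (eqVneq m 0) => [m0|m0].
  have s0 : s = (fun _ => 0) by apply: (Neq0 hN).
  rewrite s0.
  have -> : (fun t => p.1 * y t + 0) = (fun t => p.1 * y t).
    by apply: funext => t; rewrite addr0.
  rewrite NZ // sp1 Ny mul1r.
  have : 0 <= K1 * u by apply: mulr_ge0 => //; exact: ltW.
  lra.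
have m0' : 0 < m by rewrite lt_neqAle eq_sym m0 Nge0.
pose x := nrmz s.
have Ax : AY Y x by exists l'; split => //; split.
have [Hx1 Hx2] := Hy x Ax.
have cx : continuous x by have [] := nrmz_sphere cs m0.
have Hxs : N (fun t => x t + p.1 * y t) <= 1 + eps.
  case: sp => ->.
    have -> : (fun t => x t + 1 * y t) = (fun t => x t + y t).
      by apply: funext => t; rewrite mul1r.
    by [].
  have -> : (fun t => x t + -1 * y t) = (fun t => x t - y t).
    by apply: funext => t; rewrite mulN1r.
  by [].
case: (lerP 1 m) => m1.
  have -> : (fun t => p.1 * y t + s t) = (fun t => m * (x t + (p.1 / m) * y t)).
    by apply: funext => t; rewrite /x /nrmz -/m; field.
  rewrite NZ //; last by apply: cD => //; exact: cZ.
  rewrite (ger0_norm (ltW m0')).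
  have H1 : N (fun t => x t + p.1 / m * y t) <= 1 + eps.
    apply: Nconv => //.
    have : `|p.1 / m| <= 1.
      by rewrite normrM sp1 mul1r normfV (ger0_norm (ltW m0')) invf_le1.
    by rewrite ler_norml.
  apply: le_trans (ler_wpM2l (ltW m0') H1) _.
  rewrite eps_u.
  have : 0 <= (2 - m) * u by apply: mulr_ge0; [lra|exact: ltW].
  have : m * (u / 2) = m * u / 2 by rewrite mulrA.
  lra.
have -> : (fun t => p.1 * y t + s t) = (fun t => m * x t + p.1 * y t).
  by apply: funext => t; rewrite /x /nrmz -/m; field.
have Ny' : N (fun t => p.1 * y t) <= 1 + eps.
  rewrite NZ // sp1 Ny mul1r; have := eps_gt0; lra.
apply: le_trans (Nconv2 hN cx (cZ cy) Hxs Ny' _) _.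
  by rewrite (ltW m0') (ltW m1).
rewrite eps_u.
have : 0 <= K1 * u by apply: mulr_ge0 => //; exact: ltW.
lra.
Qed.
End Main.

End Part3.

Module Part4.
Import Part1.
Import Part2.
Import Part3.
Import ring lra.
Set Implicit Arguments. Unset Strict Implicit. Unset Printing Implicit Defensive.
Local Open Scope classical_set_scope.
Local Open Scope ring_scope.

Section Big.
Variables (R : realType) (K : topologicalType) (N : (K -> R) -> R) (I : Type).
Hypothesis hN : is_norm_CK N.
Variable n : nat.
Hypothesis n2 : (2 <= n)%N.
Hypotheses (hasq : ASQ_lt N I) (Iinf : infinite_set [set: I]) (i0 : I).

Lemma Sg_sub (Y Y' : set (K -> R)) : Y `<=` Y' -> Sg Y `<=` Sg Y'.
Proof. by move=> YY' p [? ?]; split => //; exact: YY'. Qed.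

Lemma chain_inL (F : set (set (K -> R))) l : total_on F subset ->
  inL (Sg (\bigcup_(Y in F) Y)) l -> l <> [::] -> exists2 Y, F Y & inL (Sg Y) l.
Proof.
move=> Ftot; elim: l => [//|p l IH] /= [[sp [Y1 F1 Y1p]] Hl] _.
case: l IH Hl => [|q l] IH Hl; first by exists Y1.
have [Y2 F2 HY2] := IH Hl (ltac:(by [])).
case: (Ftot _ _ F1 F2) => sub.
  by exists Y2 => //; split => //; split => //; exact: sub.
by exists Y1 => //; split; [split|exact: inL_sub (Sg_sub sub) HY2].
Qed.

Lemma PY_zorn : exists Y0, PY N n Y0 /\ forall Y', Y0 `<` Y' -> ~ PY N n Y'.
Proof.
apply: Zorn_bigcup => F FP Ftot; split.
  by move=> f [Y FY Yf]; exact: (FP Y FY).1 f Yf.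
move=> l Hl; case: (eqVneq l [::]) => [->|lnil].
  by rewrite sumf_nil (Nfun0 hN) /= mul0r addr0; exact: ler01.
have [ul sl Hl'] := Hl.
have [Y FY HY] := chain_inL Ftot Hl' (elimN eqP lnil).
by apply: (FP Y FY).2; split.
Qed.

Lemma m1_neq1 : ((-1 : R) == 1) = false.
Proof. apply/negbTE; apply/eqP => H. have : (-1 : R) < 1 by apply: (@lt_trans _ _ 0); [rewrite oppr_lt0|]; exact: ltr01. by rewrite H ltxx. Qed.

Lemma sumf1 (y : K -> R) : sumf [:: (1, y)] = y.
Proof. by rewrite sumf_cons sumf_nil; apply: funext => t /=; rewrite mul1r addr0. Qed.

Lemma AY_small Y0 : finite_set (AY N n Y0) \/ injle (AY N n Y0) Y0.
Proof.
pose h (l : seq (R * (K -> R))) := nrmz N (sumf l).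
have AL : AY N n Y0 `<=` h @` Lb (Sg Y0) n.
  by move=> _ [l [[_ _ Hl] [sl _]] <-]; exists l.
case: (pselect (finite_set Y0)) => [Yf|Yinf].
  left; apply: sub_finite_set AL _; apply: finite_image; apply: Lb_fin.
  apply: (@sub_finite_set _ _ ([set 1; -1] `*` Y0)); last first.
    by apply: finite_setX => //; exact: finite_set2.
  by move=> p [h1 h2]; split.
right.
have [e eY ei] := card_injle (fun _ : K => 0 : R) (proj1 (infiniteP _) Yinf).
have e01 : e 0%N != e 1%N by apply/negP => /eqP E; have := ei 0%N 1%N (mem_set Logic.I) (mem_set Logic.I) E.
have SY : injle (Sg Y0) Y0.
  apply: injle_trans (hessenberg (fun _ : K => 0 : R) Yinf).
  exists (fun p => (if p.1 == 1 then e 0%N else e 1%N, p.2)).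
    by move=> p [_ Yp]; split => //=; case: ifP => _; apply: eY.
  move=> [a f] [b g] /set_mem [/= Ha _] /set_mem [/= Hb _] [E1 ->]; congr pair.
  case: Ha Hb E1 => -> [] -> //=; rewrite eqxx m1_neq1 => E; move: e01;
    by rewrite E eqxx.
have Sginf : infinite_set (Sg Y0).
  move=> Sf; apply: Yinf; apply: card_le_finite Sf; apply: injle_card.
  exists (fun f => (1, f)) => //; first by move=> f Yf; split => //; left.
  by move=> f g _ _ [].
apply: injle_trans (injle_sub AL) _.
apply: injle_trans (card_injle [::] (card_image_le h _)) _.
exact: injle_trans (Lb_inf (0, fun _ => 0) n Sginf) SY.
Qed.

Lemma big_exists : exists Y0, PY N n Y0 /\ ([set: I] #<= Y0)%card.
Proof.
have [Y0 [HY0 Y0max]] := PY_zorn.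
exists Y0; split => //.
case: (pselect (([set: I] #<= Y0)%card)) => // nIY; exfalso.
have Asub : AY N n Y0 `<=` sphere N := AY_sphere hN HY0.1.
have [Acard1 Acard2] := card_lt_small i0 (fun _ : K => 0 : R) Iinf nIY (AY_small Y0).
have [y [cy [Ny Hy]]] := hasq Asub (conj Acard1 Acard2) (@eps_gt0 R n n2).
have nY0y : ~ Y0 y.
  move=> Y0y.
  have Ay : AY N n Y0 y.
    exists [:: (1, y)]; last first.
      by rewrite sumf1; apply: funext => t; rewrite /nrmz Ny divr1.
    split; last by split => //; rewrite sumf1 Ny oner_neq0.
    by split => //=; [exact: (leq_trans _ n2)|split => //; split => //; left].
  have [H _] := Hy y Ay.
  have : N (fun t => y t + y t) = 2.
    have -> : (fun t => y t + y t) = (fun t => 2 * y t).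
      by apply: funext => t; rewrite mulr2n mulrDl mul1r.
    by rewrite NZ // Ny mulr1 ger0_norm.
  move=> E; move: H; rewrite E /eps.
  have : (2 * n)%:R^-1 <= (1 : R) / 2.
    rewrite -[X in _ <= X]invf_div divr1 lef_pV2 ?posrE ?ltr0n ?muln_gt0 //=; last by case: n n2.
    by rewrite natrM ler_pMr ?ltr0n // ler1n; case: n n2.
  lra.
apply: (Y0max (Y0 `|` [set y])); last exact: PY_ext HY0 cy Ny Hy.
split; first by move=> f Hf; left.
by move=> H; apply: nY0y; exact: (H y (or_intror erefl)).
Qed.
End Big.

End Part4.

Module Part5.
Import Part1.
Import Part2.
Import Part3.
Import Part4.
Import ring lra.
Set Implicit Arguments. Unset Strict Implicit. Unset Printing Implicit Defensive.
Local Open Scope classical_set_scope.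
Local Open Scope ring_scope.

Definition dl (R : realType) (C : R) := (2 * C)^-1.

Lemma sum_abs_ge (R : realType) (K : Type) (d : R) (q : K) (s : seq (K -> R)) :
  (forall y, y \in s -> d < `|y q|) -> (size s)%:R * d <= \sum_(y <- s) `|y q|.
Proof.
elim: s => [|y s IH] H; first by rewrite big_nil mul0r.
rewrite big_cons /= -natr1 mulrDl mul1r addrC; apply: lerD.
  by apply: ltW; apply: H; rewrite mem_head.
by apply: IH => z zs; apply: H; rewrite in_cons zs orbT.
Qed.

Section Cells.
Variables (R : realType) (K : topologicalType) (N : (K -> R) -> R).
Hypothesis hN : is_norm_CK N.
Hypotheses (cK : compact [set: K]) (k0 : K).
Variables (c C : R) (n : nat).
Hypotheses (hc : 0 < c) (hC : 0 < C)
  (hcC : forall f, continuous f -> c * supnorm f <= N f /\ N f <= C * supnorm f)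
  (n2 : (2 <= n)%N) (hn : 2 < c * (n%:R * dl C)).
Variable Y0 : set (K -> R).
Hypothesis HY0 : PY N n Y0.

Lemma peak y : Y0 y -> exists t, dl C < `|y t|.
Proof.
move=> Yy; have [cy Ny] := HY0.1 y Yy.
apply: (supnorm_adh k0 cy).
have [_ H] := hcC cy; rewrite Ny in H.
have h2 : 0 < C^-1 by rewrite invr_gt0.
have h1 : C^-1 <= supnorm y by rewrite -[C^-1]mulr1 ler_pdivrMl.
have e : dl C = C^-1 / 2 by rewrite /dl invfM mulrC.
rewrite e; lra.
Qed.

Lemma mult l q : uniq l -> (forall y, y \in l -> Y0 y) ->
  (forall y, y \in l -> dl C < `|y q|) -> (size l < n)%N.
Proof.
move=> ul lY lq; rewrite ltnNge; apply/negP => nl.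
pose l1 := take n l.
have sl1 : size l1 = n by rewrite size_takel.
pose sg (v : R) : R := if 0 <= v then 1 else -1.
pose L := [seq (sg (y q), y) | y <- l1].
have mL : map snd L = l1.
  by rewrite /L; move: (l1) => s; elim: s => //= y s ->.
have l1l y : y \in l1 -> y \in l by apply: mem_take.
have HL : inL (Sg Y0) L.
  apply/inLP => p /mapP [y yl1 ->]; split; last by apply: lY; exact: l1l.
  by rewrite /sg; case: ifP => _; [left|right].
have aL : adm n Y0 L by split => //; [rewrite mL take_uniq|rewrite size_map sl1].
have NL := HY0.2 L aL.
rewrite size_map sl1 divff ?lt0r_neq0 ?ltr0n // in NL; last by case: n n2.
have cL := sumf_cont HY0.1 HL.
have val : sumf L q = \sum_(y <- l1) `|y q|.
  rewrite /sumf big_map; apply: eq_bigr => y _ /=; rewrite /sg.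
  by case: ifP => H; [rewrite mul1r ger0_norm|rewrite mulN1r ltr0_norm // ltNge H].
have lo := sum_abs_ge (fun y yl1 => lq y (l1l y yl1)).
rewrite sl1 -val in lo.
have [H1 _] := hcC cL.
have H2 := supnorm_ge cK k0 q cL.
have : c * (n%:R * dl C) <= c * `|sumf L q|.
  by apply: ler_wpM2l; [exact: ltW|apply: le_trans lo (ler_norm _)].
have : c * `|sumf L q| <= c * supnorm (sumf L) by apply: ler_wpM2l => //; exact: ltW.
move=> A B; have H := le_trans B (le_trans A (le_trans H1 NL)).
by have := lt_le_trans hn H; rewrite ltxx.
Qed.

Definition vl y l := [/\ uniq l, (forall z, z \in l -> Y0 z), y \in l &
  exists q, forall z, z \in l -> dl C < `|z q|].

Lemma vl_size y l : vl y l -> (size l < n)%N.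
Proof. by case=> ul lY _ [q Hq]; exact: mult ul lY Hq. Qed.

Lemma maxl y : Y0 y -> exists l, vl y l /\ forall l', vl y l' -> (size l' <= size l)%N.
Proof.
move=> Yy.
pose P := fun k => `[< exists l, vl y l /\ size l = k >].
have exP : exists k, P k.
  exists 1%N; apply/asboolP; exists [:: y]; split => //.
  split => //; first by move=> z; rewrite inE => /eqP ->.
    by rewrite mem_head.
  have [q Hq] := peak Yy; exists q => z; rewrite inE => /eqP ->.
  exact: Hq.
have ubP : forall k, P k -> (k <= n)%N.
  by move=> k /asboolP [l [vll <-]]; exact: ltnW (vl_size vll).
case: (ex_maxnP exP ubP) => k /asboolP [l [vll sl]] Hmax.
exists l; split => // l' vl'; rewrite sl; apply: Hmax; apply/asboolP; exists l'.
by [].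
Qed.

Definition Wm (m : set (K -> R)) := [set t | forall z, m z -> dl C < `|z t|].

Lemma cont_ext (f g : K -> R) : (forall t, f t = g t) -> continuous g -> continuous f.
Proof. by move=> H; have -> : f = g by apply: funext. Qed.

Lemma hm_cont (s : seq (K -> R)) : (forall z, z \in s -> continuous z) ->
  continuous (fun t => \prod_(z <- s) Num.max (`|z t| - dl C) 0).
Proof.
elim: s => [|z s IH] H.
  by apply: (cont_ext (g := fun _ => 1)); [move=> t; rewrite big_nil|exact: cC].
apply: (cont_ext (g := fun t => Num.max (`|z t| - dl C) 0 *
  \prod_(y <- s) Num.max (`|y t| - dl C) 0)).
  by move=> t; rewrite big_cons.
apply: cM; last by apply: IH => y ys; apply: H; rewrite in_cons ys orbT.
apply: cMax; last exact: cC.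
apply: cD; last exact: cC.
by apply: cA; apply: H; rewrite mem_head.
Qed.

Lemma max0_neq0 (a : R) : (Num.max a 0 != 0) = (0 < a).
Proof.
case: (lerP a 0) => h.
  by rewrite eqxx.
by rewrite gt_eqF.
Qed.

Lemma hm_neq0 (s : seq (K -> R)) t :
  (\prod_(z <- s) Num.max (`|z t| - dl C) 0 != 0) = all (fun z => dl C < `|z t|) s.
Proof.
rewrite prodf_seq_neq0; apply: eq_all => z /=.
by rewrite max0_neq0 subr_gt0.
Qed.

Lemma hm_ge0 (s : seq (K -> R)) t : 0 <= \prod_(z <- s) Num.max (`|z t| - dl C) 0.
Proof. by apply: prodr_ge0 => z _; rewrite le_max lexx orbT. Qed.

Variable J : Type.
Hypotheses (HJ : ([set: J] #<= Y0)%card) (Jinf : infinite_set [set: J]).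

Lemma cells_G : exists G : J -> K -> R,
  [/\ forall i, continuous (G i),
      forall i t, 0 <= G i t <= 1,
      forall i r, r < 1 -> exists t, r < G i t &
      forall i j t, G i t != 0 -> G j t != 0 -> i = j].
Proof.
have [L HL] := @choice_on _ _ Y0
  (fun y l => vl y l /\ forall l', vl y l' -> (size l' <= size l)%N) [::] maxl.
pose Sset y := [set z | z \in L y].
have factb y z t : Y0 y -> Y0 z -> z \notin L y -> Wm (Sset y) t -> `|z t| <= dl C.
  move=> Yy Yz zL Wt; rewrite leNgt; apply/negP => zt.
  have [[ul lY yl _] Hmax] := HL y Yy.
  have v : vl y (z :: L y).
    split => //=; first by rewrite zL.
    - by move=> w; rewrite in_cons => /orP [/eqP ->|/lY].
    - by rewrite in_cons yl orbT.
    - exists t => w; rewrite in_cons => /orP [/eqP ->|wl] //.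
      by apply: Wt.
  by have := Hmax _ v; rewrite /= ltnn.
have factc y y' t : Y0 y -> Y0 y' -> Sset y <> Sset y' -> Wm (Sset y) t -> Wm (Sset y') t -> False.
  move=> Yy Yy' neq Wt Wt'.
  case: (pselect (forall z, (z \in L y) = (z \in L y'))) => [H|].
    by apply: neq; apply/seteqP; split => z /=; rewrite /Sset /= H.
  move/existsNP => [z]; case: (boolP (z \in L y)) => zy; case: (boolP (z \in L y')) => zy' //.
  - move=> _; have [[_ lY _ _] _] := HL y Yy.
    have := factb y' z t Yy' (lY _ zy) zy' Wt'.
    by rewrite leNgt (Wt z zy).
  - move=> _; have [[_ lY _ _] _] := HL y' Yy'.
    have := factb y z t Yy (lY _ zy') zy Wt.
    by rewrite leNgt (Wt' z zy').
pose M := Sset @` Y0.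
have [rep Hrep] := @choice_on _ _ M (fun m r => Y0 r /\ Sset r = m) (fun _ => 0)
  (fun m '(ex_intro2 y Yy E) => ex_intro _ y (conj Yy E)).
have yL y : Y0 y -> y \in L y by move=> Yy; have [[]] := HL y Yy.
have YM : injle Y0 (M `*` `I_n).
  exists (fun y => (Sset y, index y (L (rep (Sset y))))).
    move=> y Yy; split; first by exists y.
    have [Yr Er] := Hrep (Sset y) (ex_intro2 _ _ y Yy erefl).
    have yLr : y \in L (rep (Sset y)).
      by have : Sset (rep (Sset y)) y by rewrite Er; exact: yL.
    rewrite /= /`I_n /=; apply: leq_trans (vl_size (HL _ Yr).1).
    by rewrite ltnS; apply: ltnW; rewrite index_mem.
  move=> y y' /set_mem Yy /set_mem Yy' [E1 E2].
  have [Yr Er] := Hrep (Sset y) (ex_intro2 _ _ y Yy erefl).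
  have yLr : y \in L (rep (Sset y)).
    by have : Sset (rep (Sset y)) y by rewrite Er; exact: yL.
  have y'Lr : y' \in L (rep (Sset y)).
    have : Sset (rep (Sset y)) y' by rewrite Er E1; exact: yL.
    by [].
  rewrite -E1 in E2; by rewrite -(nth_index 0 yLr) E2 (nth_index 0 y'Lr).
have JY := card_injle (fun _ : K => 0 : R) HJ.
have [iota iM ii] : injle [set: J] M.
  case: (pselect (finite_set M)) => [Mf|Minf].
    exfalso; apply: Jinf; apply: (card_le_finite (injle_card JY)).
    apply: (card_le_finite (injle_card YM)).
    by apply: finite_setX => //; exact: finite_II.
  apply: (injle_trans JY); apply: (injle_trans YM).
  apply: injle_trans (hessenberg set0 Minf).
  apply: injle_prod; first exact: injle_refl.
  apply: injle_trans (card_injle set0 (proj1 (infiniteP _) Minf)).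
  exact: injle_sub.
pose Lm m := L (rep m).
pose hm m t := \prod_(z <- Lm m) Num.max (`|z t| - dl C) 0.
have Hm i : [/\ Y0 (rep (iota i)), Sset (rep (iota i)) = iota i & vl (rep (iota i)) (Lm (iota i))].
  have [Yr Er] := Hrep (iota i) (iM i Logic.I).
  by split => //; have [] := HL _ Yr.
have hmc i : continuous (hm (iota i)).
  apply: hm_cont => z zL; have [_ _ [_ lY _ _]] := Hm i.
  by have [] := HY0.1 z (lY z zL).
have hW i t : hm (iota i) t != 0 -> Wm (iota i) t.
  rewrite /hm hm_neq0 => /allP H z; have [_ <- _] := Hm i; exact: H.
have sm_gt0 i : 0 < supnorm (hm (iota i)).
  have [_ _ [_ _ _ [q Hq]]] := Hm i.
  have hq : 0 < hm (iota i) q.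
    by rewrite lt0r hm_neq0 hm_ge0 andbT; apply/allP.
  apply: lt_le_trans hq _.
  by have := supnorm_ge cK k0 q (hmc i); rewrite ger0_norm // hm_ge0.
exists (fun i t => hm (iota i) t / supnorm (hm (iota i))); split.
- move=> i; apply: cM; [exact: hmc|exact: cC].
- move=> i t; rewrite divr_ge0 ?hm_ge0 ?(ltW (sm_gt0 i)) //= ler_pdivrMr // mul1r.
  by have := supnorm_ge cK k0 t (hmc i); rewrite ger0_norm // hm_ge0.
- move=> i r r1.
  have : r * supnorm (hm (iota i)) < supnorm (hm (iota i)).
    by rewrite gtr_pMl.
  move=> /(supnorm_adh k0 (hmc i)) [t Ht]; exists t.
  rewrite ltr_pdivlMr //; move: Ht; rewrite ger0_norm //; exact: hm_ge0.
- move=> i j t Hi Hj.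
  have Wi : Wm (iota i) t.
    by apply: hW; move: Hi; apply: contraNneq => ->; rewrite mul0r.
  have Wj : Wm (iota j) t.
    by apply: hW; move: Hj; apply: contraNneq => ->; rewrite mul0r.
  case: (pselect (iota i = iota j)) => [E|neq].
    by apply: ii; rewrite ?inE.
  exfalso; have [Yi Ei _] := Hm i; have [Yj Ej _] := Hm j.
  by apply: (factc _ _ t Yi Yj); rewrite ?Ei ?Ej.
Qed.
End Cells.

End Part5.

Module Part6.
Import Part1.
Import Part2.
Import Part3.
Import Part4.
Import Part5.
Import ring lra finmap.
Set Implicit Arguments. Unset Strict Implicit. Unset Printing Implicit Defensive.
Local Open Scope classical_set_scope.
Local Open Scope ring_scope.

Section Embed.
Variables (R : realType) (K : topologicalType) (I : choiceType) (G : I -> K -> R).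
Hypotheses (cK : compact [set: K]) (k0 : K) (i0 : I).
Unset Implicit Arguments.
Hypotheses (G1 : forall i, continuous (G i))
  (G2 : forall i t, 0 <= G i t <= 1)
  (G3 : forall i r, r < 1 -> exists t, r < G i t)
  (G4 : forall i j t, G i t != 0 -> G j t != 0 -> i = j).
Set Implicit Arguments.

Definition Tm (x : I -> R) : K -> R := fun t =>
  match pselect (exists i, G i t != 0) with
  | left e => x (sval (cid e)) * G (sval (cid e)) t
  | right _ => 0 end.

Lemma Tm_eq x t i : G i t != 0 -> Tm x t = x i * G i t.
Proof.
move=> Hi; rewrite /Tm; case: pselect => [e|ne]; last by exfalso; apply: ne; exists i.
by have := svalP (cid e) => /(G4 _ _ _ Hi) <-.
Qed.

Lemma Tm_0 x t : (forall i, G i t = 0) -> Tm x t = 0.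
Proof.
move=> H; rewrite /Tm; case: pselect => [e|//].
by have := svalP (cid e); rewrite H eqxx.
Qed.

Lemma Tm_lin a x y : Tm (fun i => a * x i + y i) = (fun t => a * Tm x t + Tm y t).
Proof.
apply: funext => t; case: (pselect (exists i, G i t != 0)) => [[i Hi]|ne].
  by rewrite !(Tm_eq _ Hi); ring.
have H i : G i t = 0 by case: (eqVneq (G i t) 0) => // Hi; exfalso; apply: ne; exists i.
by rewrite !Tm_0 // mulr0 addr0.
Qed.

Lemma c0_ub (x : I -> R) : c0 x -> has_ubound (range (fun i => `|x i|)).
Proof.
move=> cx; have Ff := cx 1 ltr01.
exists (1 + \sum_(i <- fset_set [set i | 1 <= `|x i|]) `|x i|) => _ [i _ <-].
case: (lerP 1 `|x i|) => Hi; last first.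
  by apply: le_trans (ltW Hi) _; rewrite lerDl sumr_ge0.
have iF : i \in fset_set [set i | 1 <= `|x i|] by rewrite in_fset_set //; apply: mem_set.
rewrite (bigD1_seq i) //= ?fset_uniq //.
have : 0 <= \sum_(i1 <- fset_set [set i1 | 1 <= `|x i1|] | i1 != i) `|x i1| by rewrite sumr_ge0.
lra.
Qed.

Lemma c0norm_ge (x : I -> R) i : c0 x -> `|x i| <= c0norm x.
Proof. by move=> cx; apply: ub_le_sup; [exact: c0_ub|exists i]. Qed.

Lemma Tm_cont x : c0 x -> continuous (Tm x).
Proof.
move=> cx t0; case: (pselect (exists i, G i t0 != 0)) => [[i Hi]|ne].
  have nearG : \forall t \near t0, G i t != 0 := @cvgr_neq0 _ R^o _ _ _ (G i) _ (G1 i t0) Hi.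
  have Heq : {near t0, (fun t => x i * G i t) =1 Tm x}.
    near=> t; rewrite (Tm_eq x (_ : G i t != 0)) //; near: t; exact: nearG.
  apply: cvg_trans (near_eq_cvg Heq) _.
  by rewrite (Tm_eq x Hi); exact: (cZ (G1 i)).
have H0 i : G i t0 = 0 by case: (eqVneq (G i t0) 0) => // Hi; exfalso; apply: ne; exists i.
rewrite /continuous_at (Tm_0 x H0); apply/cvgrPdist_lt => e e0.
pose F := [set i | e <= `|x i|].
pose Z := \bigcup_(i in F) [set t | e <= `|x i| * G i t].
have cZ' : closed Z.
  apply: closed_bigcup; first exact: cx.
  move=> i _.
  have := proj1 (@continuous_closedP K R (fun t => `|x i| * G i t)) (cZ (G1 i)) _ (@closed_ge R e).
  by [].
have Zt0 : ~ Z t0 by move=> [i _ /=]; rewrite H0 mulr0 leNgt e0.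
have : nbhs t0 (~` Z) by apply: open_nbhs_nbhs; split => //; exact: closed_openC.
apply: filterS => t nZt; rewrite sub0r normrN.
case: (pselect (exists i, G i t != 0)) => [[i Hi]|ne'].
  have [g0 g1] := andP (G2 i t).
  rewrite (Tm_eq x Hi) normrM (ger0_norm g0).
  case: (lerP e `|x i|) => xi.
    by rewrite ltNge; apply/negP => H; apply: nZt; exists i.
  by apply: le_lt_trans xi; rewrite ler_piMr.
have H i : G i t = 0 by case: (eqVneq (G i t) 0) => // Hi; exfalso; apply: ne'; exists i.
by rewrite Tm_0 // normr0.
Unshelve. all: by end_near.
Qed.

Lemma Tm_le x : c0 x -> supnorm (Tm x) <= c0norm x.
Proof.
move=> cx; apply: (supnorm_le k0) => t.
case: (pselect (exists i, G i t != 0)) => [[i Hi]|ne'].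
  have [g0 g1] := andP (G2 i t).
  rewrite (Tm_eq x Hi) normrM (ger0_norm g0).
  by apply: le_trans (c0norm_ge i cx); rewrite ler_piMr.
have H i : G i t = 0 by case: (eqVneq (G i t) 0) => // Hi; exfalso; apply: ne'; exists i.
by rewrite Tm_0 // normr0; apply: le_trans (c0norm_ge i0 cx).
Qed.

Lemma Tm_ge x : c0 x -> c0norm x <= supnorm (Tm x).
Proof.
move=> cx; have cT := Tm_cont cx.
have s0 := supnorm_ge0 cK k0 cT.
apply: ge_sup; first by exists `|x i0|, i0.
move=> _ [i _ <-]; rewrite leNgt; apply/negP => Hlt.
have xi0 : 0 < `|x i| by apply: le_lt_trans Hlt.
have Hr : supnorm (Tm x) / `|x i| < 1 by rewrite ltr_pdivrMr // mul1r.
have [t Ht] := G3 i _ Hr.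
have Gt : G i t != 0.
  by rewrite gt_eqF // (le_lt_trans _ Ht) // divr_ge0.
have := supnorm_ge cK k0 t cT; rewrite (Tm_eq x Gt) normrM.
rewrite (ger0_norm (proj1 (andP (G2 i t)))) => H.
move: Ht; rewrite ltr_pdivrMr // mulrC => Ht.
by have := lt_le_trans Ht H; rewrite ltxx.
Qed.

Lemma embed : contains_c0 R K I.
Proof.
exists Tm; split; first by move=> x; exact: Tm_cont.
split; first by move=> a x y _ _; exact: Tm_lin.
exists 1, 1; split; first exact: ltr01.
split; first exact: ltr01.
by move=> x cx; rewrite !mul1r; split; [exact: Tm_ge|exact: Tm_le].
Qed.
End Embed.

End Part6.

Import Part1 Part2 Part3 Part4 Part5 Part6.
Import ring lra.
Unset Implicit Arguments.
Local Open Scope classical_set_scope.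
Local Open Scope ring_scope.

Definition Ich (I : Type) : Type := I.
HB.instance Definition _ (I : Type) := gen_eqMixin (Ich I).
HB.instance Definition _ (I : Type) := gen_choiceMixin (Ich I).

Theorem theorem3p3 (R : realType) (K : topologicalType)
    (hK : hausdorff_space K) (cK : compact [set: K])
    (I : Type) (hI : infinite_set [set: I])
    (N : (K -> R) -> R) (hN : equiv_norm_CK N) (hasq : ASQ_lt N I) :
  contains_c0 R K I.
Proof.
have [hN' [c [C [hc [hC hcC]]]]] := hN.
have [i0 _] := infinite_setN0 hI.
case: (pselect (exists k : K, True)) => [[k0 _]|nK]; last first.
  exfalso.
  have A0 : (@set0 (K -> R)) `<=` [set f | continuous f /\ N f = 1] by [].
  have cl : card_lt (@set0 (K -> R)) [set: I].
    split; first exact: card_ge0.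
    by move=> /card_le0P E; have : [set: I] i0 by []; rewrite E.
  have [y [cy [Ny _]]] := hasq _ A0 cl 1 ltr01.
  have E : y = (fun _ => 0) by apply: funext => t; exfalso; apply: nK; exists t.
  by move: Ny; rewrite E (Nfun0 hN') => /eqP; rewrite eq_sym oner_eq0.
have cd : 0 < c * dl C by rewrite mulr_gt0 // /dl invr_gt0 mulr_gt0.
pose x := 2 / (c * dl C).
have x0 : 0 <= x by rewrite divr_ge0 // ltW.
pose n := (Num.Def.archi_bound x + 2)%N.
have n2 : (1 < n)%N by rewrite /n addn2.
have hn : 2 < c * (n%:R * dl C).
  have h1 : x < n%:R.
    apply: lt_le_trans (archi_boundP x0) _.
    by rewrite ler_nat /n leq_addr.
  rewrite mulrCA.
  have : x * (c * dl C) < n%:R * (c * dl C) by rewrite ltr_pM2r.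
  by rewrite /x mulfVK ?lt0r_neq0.
have [Y0 [HY0 HIY]] := big_exists hN' n2 hasq hI i0.
have [G [G1 G2 G3 G4]] := cells_G cK k0 hc hC hcC n2 hn HY0 HIY hI.
exact: (@embed R K (Ich I) G cK k0 i0 G1 G2 G3 G4).
Qed.
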